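(* Let $K\in\{\mathbb R,\mathbb C,\mathbb H\}$ and let $(E,d)$ be a metric vector space over $K$ such that $d$ is $C_0$-translation invariant and $(C_1,C_2,C_3)$-lipschitz multiplicative. Let $\delta(x,y)=\lim_{n\to\infty}\frac1n d(nx,ny)$ and $E_0=\{x\in E:\ \delta(ux,0)=0\text{ for all }u\in\mathbb U\}$ (equivalently, the maximal linear subspace of $E$ on which $d$ is bounded). Then $E_0$ is a closed subspace of $E$.
   Context: A metric vector space is a topological vector space over $K$ whose topology is generated by the metric $d$. $\mathbb U=\{u\in K:|u|=1\}$. $d$ is $C_0$-translation invariant if $d(x+z,y+z)\le d(x,y)+C_0$ for all $x,y,z$. $(C_1,C_2,C_3)$-lipschitz multiplicative ($C_1\ge1$, $C_2,C_3\ge0$) means $C_1^{-1}|\lambda|d(x,y)-C_2|\lambda|-C_3\le d(\lambda x,\lambda y)\le C_1|\lambda|d(x,y)+C_2|\lambda|+C_3$ for all $\lambda\in K$, $x,y\in E$. (Under these hypotheses the limit defining $\delta$ exists.) *)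

(* Defs.v *)
From HB Require Import structures.
From mathcomp Require Import all_boot all_order all_algebra.
From mathcomp Require Import ring.
From mathcomp Require Import complex.
From mathcomp Require Import all_classical all_reals topology normedtype sequences.

Set Implicit Arguments.
Unset Strict Implicit.
Unset Printing Implicit Defensive.

Import Order.TTheory GRing.Theory Num.Theory.
Import numFieldNormedType.Exports.
Local Open Scope classical_set_scope.
Local Open Scope ring_scope.

Section Quaternions.
Variable R : realType.

Record quat := Quat { q0 : R; q1 : R; q2 : R; q3 : R }.

Definition quat_to (q : quat) := (q0 q, q1 q, q2 q, q3 q).
Definition quat_of (t : R * R * R * R) :=
  let: (a, b, c, d) := t in Quat a b c d.
Lemma quat_toK : cancel quat_to quat_of. Proof. by case. Qed.

HB.instance Definition _ := Choice.copy quat (can_type quat_toK).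

Definition qzero := Quat 0 0 0 0.
Definition qopp (p : quat) := Quat (- q0 p) (- q1 p) (- q2 p) (- q3 p).
Definition qadd (p q : quat) :=
  Quat (q0 p + q0 q) (q1 p + q1 q) (q2 p + q2 q) (q3 p + q3 q).

Lemma qaddA : associative qadd.
Proof. by move=> [? ? ? ?] [? ? ? ?] [? ? ? ?]; rewrite /qadd /= !addrA. Qed.
Lemma qaddC : commutative qadd.
Proof.
by move=> [? ? ? ?] [? ? ? ?]; rewrite /qadd /= [X in Quat X _ _ _]addrC
  [X in Quat _ X _ _]addrC [X in Quat _ _ X _]addrC [X in Quat _ _ _ X]addrC.
Qed.
Lemma qadd0 : left_id qzero qadd.
Proof. by move=> [? ? ? ?]; rewrite /qadd /= !add0r. Qed.
Lemma qaddN : left_inverse qzero qopp qadd.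
Proof. by move=> [? ? ? ?]; rewrite /qadd /= !addNr. Qed.

HB.instance Definition _ := GRing.isZmodule.Build quat qaddA qaddC qadd0 qaddN.

Definition qone := Quat 1 0 0 0.
(* Hamilton product: i^2 = j^2 = k^2 = ijk = -1. *)
Definition qmul (p q : quat) :=
  let: Quat a1 b1 c1 d1 := p in let: Quat a2 b2 c2 d2 := q in
  Quat (a1 * a2 - b1 * b2 - c1 * c2 - d1 * d2)
       (a1 * b2 + b1 * a2 + c1 * d2 - d1 * c2)
       (a1 * c2 - b1 * d2 + c1 * a2 + d1 * b2)
       (a1 * d2 + b1 * c2 - c1 * b2 + d1 * a2).

Lemma qmulA : associative qmul.
Proof. by move=> [? ? ? ?] [? ? ? ?] [? ? ? ?]; rewrite /qmul; congr Quat; ring. Qed.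
Lemma qmul1 : left_id qone qmul.
Proof. by move=> [? ? ? ?]; rewrite /qmul; congr Quat; ring. Qed.
Lemma qmulr1 : right_id qone qmul.
Proof. by move=> [? ? ? ?]; rewrite /qmul; congr Quat; ring. Qed.
Lemma qmulDl : left_distributive qmul +%R.
Proof.
move=> p q r; change (qmul (qadd p q) r = qadd (qmul p r) (qmul q r)).
by case: p q r => [? ? ? ?] [? ? ? ?] [? ? ? ?]; rewrite /qmul /qadd /=; congr Quat; ring.
Qed.
Lemma qmulDr : right_distributive qmul +%R.
Proof.
move=> p q r; change (qmul p (qadd q r) = qadd (qmul p q) (qmul p r)).
by case: p q r => [? ? ? ?] [? ? ? ?] [? ? ? ?]; rewrite /qmul /qadd /=; congr Quat; ring.
Qed.
Lemma qone_neq0 : qone != 0.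
Proof. apply/eqP => /(congr1 q0) /= /eqP; by rewrite oner_eq0. Qed.

HB.instance Definition _ := GRing.Zmodule_isNzRing.Build quat
  qmulA qmul1 qmulr1 qmulDl qmulDr qone_neq0.

Definition qnorm (q : quat) : R :=
  Num.sqrt (q0 q ^+ 2 + q1 q ^+ 2 + q2 q ^+ 2 + q3 q ^+ 2).

End Quaternions.

Inductive scalar_kind := KReal | KComplex | KQuat.

Definition scal (R : realType) (k : scalar_kind) : nzRingType :=
  match k with
  | KReal => R^o
  | KComplex => R[i]
  | KQuat => quat R
  end.

Definition absK (R : realType) (k : scalar_kind) : scal R k -> R :=
  match k return scal R k -> R with
  | KReal => fun x : R => `|x|
  | KComplex => fun z : R[i] => Normc.normc z
  | KQuat => fun q : quat R => qnorm q
  end.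

Section MetricVectorSpace.
Variables (R : realType) (k : scalar_kind).
Local Notation K := (scal R k).
Variables (E : lmodType K) (d : E -> E -> R).

Definition is_metric : Prop :=
  [/\ forall x y, 0 <= d x y,
      forall x y, d x y = 0 <-> x = y,
      forall x y, d x y = d y x &
      forall x y z, d x z <= d x y + d y z].

(* E, with the topology generated by d, is a topological vector space over K
   (K carrying the topology of its absolute value): addition E x E -> E and
   scalar multiplication K x E -> E are continuous. *)
Definition metric_vector_space : Prop :=
  is_metric /\
  (forall x y (e : R), 0 < e -> exists2 del : R, 0 < del &
     forall x' y', d x x' < del -> d y y' < del -> d (x + y) (x' + y') < e) /\
  (forall (a : K) x (e : R), 0 < e -> exists2 del : R, 0 < del &
     forall (a' : K) x', absK (a - a') < del -> d x x' < del ->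
       d (a *: x) (a' *: x') < e).

Definition translation_invariant (C0 : R) : Prop :=
  forall x y z, d (x + z) (y + z) <= d x y + C0.

Definition lipschitz_multiplicative (C1 C2 C3 : R) : Prop :=
  [/\ 1 <= C1, 0 <= C2, 0 <= C3 &
   forall (l : K) x y,
     C1^-1 * absK (l) * d x y - C2 * absK (l) - C3 <= d (l *: x) (l *: y) /\
     d (l *: x) (l *: y) <= C1 * absK (l) * d x y + C2 * absK (l) + C3].

Definition delta (x y : E) : R :=
  lim ((fun n : nat => d (x *+ n) (y *+ n) / n%:R) @ \oo).

Definition E0 : set E :=
  [set x | forall u : K, absK (u) = 1 -> delta (u *: x) 0 = 0].

Definition is_subspace (S : set E) : Prop :=
  S 0 /\ forall (a : K) x y, S x -> S y -> S (a *: x + y).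

Definition d_closed (S : set E) : Prop :=
  forall x, (forall e : R, 0 < e -> exists2 y, S y & d x y < e) -> S x.

End MetricVectorSpace.

(* Main.v *)
Require Import Defs.
From HB Require Import structures.
From mathcomp Require Import all_boot all_order all_algebra.
From mathcomp Require Import complex.
From mathcomp Require Import all_classical all_reals topology normedtype sequences.
From mathcomp Require Import lra.
Import Order.TTheory GRing.Theory Num.Theory.
Import numFieldNormedType.Exports.
Local Open Scope classical_set_scope.
Local Open Scope ring_scope.

Section Fek.
Variable R : realType.

Definition ev0 (f : nat -> R) :=
  forall e : R, 0 < e -> exists N, forall n, (N <= n)%N -> f n <= e.

Lemma ev0_cvg (f : nat -> R) : (forall n, 0 <= f n) -> ev0 f -> f @ \oo --> 0.
Proof.
move=> f0 hf; apply/cvgrPdist_le => e e0.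
have [N HN] := hf e e0; exists N => // n /= Hn.
by rewrite sub0r normrN ger0_norm // HN.
Qed.

Lemma cvg_ev0 (f : nat -> R) : (forall n, 0 <= f n) -> f @ \oo --> 0 -> ev0 f.
Proof.
move=> f0 /cvgrPdist_le hf e e0.
have [N _ HN] := hf e e0; exists N => n Hn.
by have := HN n Hn; rewrite sub0r normrN ger0_norm.
Qed.

Lemma ev0_inv (C : R) : ev0 (fun n => C / n%:R).
Proof.
move=> e e0; exists (Num.Def.truncn (C / e)).+1 => n Hn.
have hn : (C / e) < n%:R.
  apply: (lt_le_trans (truncnS_gt _)); by rewrite ler_nat.
have n0 : 0 < n%:R :> R by rewrite ltr0n; apply: leq_trans Hn.
rewrite ler_pdivrMr //; move: hn; rewrite ltr_pdivrMr // => h; lra.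
Qed.

Lemma ev0_add (f g : nat -> R) : ev0 f -> ev0 g -> ev0 (fun n => f n + g n).
Proof.
move=> hf hg e e0.
have [N1 H1] := hf (e/2) ltac:(by rewrite divr_gt0).
have [N2 H2] := hg (e/2) ltac:(by rewrite divr_gt0).
exists (maxn N1 N2) => n; rewrite geq_max => /andP[n1 n2].
have := H1 n n1; have := H2 n n2; lra.
Qed.

Lemma ev0_le (f g : nat -> R) N0 : (forall n, (N0 <= n)%N -> f n <= g n) -> ev0 g -> ev0 f.
Proof.
move=> hfg hg e e0; have [N H] := hg e e0.
exists (maxn N N0) => n; rewrite geq_max => /andP[n1 n2].
exact: le_trans (hfg n n2) (H n n1).
Qed.

Lemma ev0_scale (f : nat -> R) c : (forall n, 0 <= f n) -> ev0 f -> ev0 (fun n => c * f n).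
Proof.
move=> f0 hf e e0; case: (lerP c 0) => hc.
  by exists 0%N => n _; apply: le_trans (ltW e0); rewrite mulr_le0_ge0.
have [N H] := hf (e / c) ltac:(by rewrite divr_gt0).
exists N => n /H; rewrite ler_pdivlMr // => h; by rewrite mulrC.
Qed.

Section Fekete.
Variable b : nat -> R.
Hypothesis hb0 : forall n, 0 <= b n.
Hypothesis hbs : forall n m, b (n + m) <= b n + b m.

Lemma fek_mul q m r : b (q * m + r) <= q%:R * b m + b r.
Proof.
elim: q => [|q IH]; first by rewrite mul0n add0n mul0r add0r.
rewrite mulSn -addnA; apply: (le_trans (hbs _ _)).
rewrite mulrS mulrDl mul1r; lra.
Qed.

Lemma fek_bound m : (0 < m)%N -> forall e, 0 < e ->
  exists N, forall n, (N <= n)%N -> b n / n%:R <= b m / m%:R + e.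
Proof.
move=> m0 e e0.
pose M := \sum_(r < m) b r.
have hM : forall r, (r < m)%N -> b r <= M.
  move=> r rm; rewrite /M (bigD1 (Ordinal rm)) //= lerDl.
  by apply: sumr_ge0 => i _.
have [N HN] := ev0_inv M e e0.
exists (maxn N 1) => n; rewrite geq_max => /andP[nN n1].
have n0 : 0 < n%:R :> R by rewrite ltr0n.
have mr0 : 0 < m%:R :> R by rewrite ltr0n.
have h1 : b n <= (n %/ m)%:R * b m + M.
  rewrite {1}(divn_eq n m); apply: (le_trans (fek_mul _ _ _)).
  by rewrite lerD2l; apply: hM; rewrite ltn_mod.
have h2 : (n %/ m)%:R * m%:R <= n%:R :> R.
  by rewrite -natrM ler_nat leq_divM.
have h3 := HN n nN.
have hbm := hb0 m.
set q := (n %/ m)%:R in h1 h2 *.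
have q0 : 0 <= q by [].
rewrite ler_pdivrMr //.
have : (b m / m%:R) * (q * m%:R) <= (b m / m%:R) * n%:R.
  by apply: ler_wpM2l => //; rewrite divr_ge0.
rewrite mulrCA divfK ?gt_eqF //.
move: h3; rewrite ler_pdivrMr // => h3.
rewrite mulrDl; lra.
Qed.

Definition fekS := [set x | exists2 n, (0 < n)%N & x = b n / n%:R].

Lemma fek_cvg : (fun n => b n / n%:R) @ \oo --> inf fekS.
Proof.
have hinf : has_inf fekS.
  split; first by exists (b 1%N / 1%:R), 1%N.
  exists 0 => x [n _ ->]; by rewrite divr_ge0.
apply/cvgrPdist_le => e e0.
have [x [m m0 ->] hx] := inf_adherent (ltac:(by rewrite divr_gt0) : 0 < e/2) hinf.
have [N HN] := @fek_bound m m0 _ (ltac:(by rewrite divr_gt0) : 0 < e/2).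
exists (maxn N 1) => // n; rewrite /= geq_max => /andP[nN n1].
have h1 := HN n nN.
have h2 : inf fekS <= b n / n%:R by apply: (ge_inf hinf.2); exists n.
rewrite ler_norml; apply/andP; split; lra.
Qed.

End Fekete.

End Fek.
Arguments fek_cvg {R b}.
Arguments fek_bound {R b}.
Arguments ev0_inv {R}.
Arguments ev0 {R}.
Lemma absK1 (R : realType) (k : scalar_kind) : absK (1 : scal R k) = 1.
Proof.
case: k => /=.
- exact: normr1.
- by rewrite /Normc.normc /= expr1n expr0n /= addr0 sqrtr1.
- by rewrite /qnorm /= expr1n expr0n /= !addr0 sqrtr1.
Qed.

Lemma absK0 (R : realType) (k : scalar_kind) : absK (0 : scal R k) = 0.
Proof.
case: k => /=.
- exact: normr0.
- by rewrite /Normc.normc /= expr0n /= addr0 sqrtr0.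
- by rewrite /qnorm /= expr0n /= !addr0 sqrtr0.
Qed.

Set Implicit Arguments.
Unset Strict Implicit.
Section Main.
Variables (R : realType) (k : scalar_kind) (E : lmodType (scal R k)) (d : E -> E -> R) (C0 C1 C2 C3 : R).
Hypothesis hm : metric_vector_space d.
Hypothesis ht : translation_invariant d C0.
Hypothesis hl : lipschitz_multiplicative d C1 C2 C3.

Definition A (z : E) (n : nat) : R := d (z *+ n) 0 / n%:R.

Lemma d_ge0 x y : 0 <= d x y.
Proof. by case: hm => [[h _ _ _] _]. Qed.

Lemma d_xx x : d x x = 0.
Proof. by case: hm => [[_ h _ _] _]; apply/h. Qed.

Lemma d_tri x y z : d x z <= d x y + d y z.
Proof. by case: hm => [[_ _ _ h] _]. Qed.

Lemma C0_ge0 : 0 <= C0.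
Proof. by have := ht 0 0 0; rewrite !d_xx add0r. Qed.

Lemma A_ge0 z n : 0 <= A z n.
Proof. by rewrite /A divr_ge0 ?d_ge0. Qed.

Lemma d_add W Z : d (W + Z) 0 <= d W 0 + d Z 0 + C0.
Proof.
apply: (le_trans (d_tri _ (0 + Z) _)); rewrite add0r.
have := ht W 0 Z; rewrite add0r; lra.
Qed.

Lemma A_add w z n : A (w + z) n <= A w n + A z n + C0 / n%:R.
Proof.
rewrite /A mulrnDl -!mulrDl; apply: ler_wpM2r; first by rewrite invr_ge0.
exact: d_add.
Qed.

Lemma A_lim z : A z @ \oo --> lim (A z @ \oo).
Proof.
pose b n := d (z *+ n) 0 + C0.
have hb0 : forall n, 0 <= b n by move=> n; rewrite /b addr_ge0 ?d_ge0 ?C0_ge0.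
have hbs : forall n m, b (n + m) <= b n + b m.
  by move=> n m; rewrite /b mulrnDr; have := @d_add (z *+ n) (z *+ m); lra.
have h1 := fek_cvg hb0 hbs.
have h2 : (fun n => C0 / n%:R) @ \oo --> 0.
  apply: ev0_cvg; last exact: ev0_inv.
  by move=> n; rewrite divr_ge0 ?C0_ge0.
have h3 : (fun n => b n / n%:R - C0 / n%:R) @ \oo --> inf (fekS R b) - 0.
  exact: cvgB h1 h2.
have eA : A z = (fun n => b n / n%:R - C0 / n%:R).
  by apply: funext => n; rewrite /A /b mulrDl addrK.
rewrite eA (cvg_lim (@Rhausdorff R) h3); exact: h3.
Qed.

Lemma delta_A z : delta d z 0 = lim (A z @ \oo).
Proof.
rewrite /delta.
have -> : (fun n : nat => d (z *+ n) (0 *+ n) / n%:R) = A z.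
  by apply: funext => n; rewrite mul0rn.
by [].
Qed.

Lemma E0_ev0 x u : E0 d x -> absK u = 1 -> ev0 (A (u *: x)).
Proof.
move=> hx hu; apply: cvg_ev0; first exact: A_ge0.
have := A_lim (z := u *: x); by rewrite -delta_A hx.
Qed.

Lemma ev0_E0 x : (forall u, absK u = 1 -> ev0 (A (u *: x))) -> E0 d x.
Proof.
move=> h u hu; rewrite delta_A; apply: (cvg_lim (@Rhausdorff R)).
apply: ev0_cvg; [exact: A_ge0 | exact: h].
Qed.

Lemma A_scale c x : ev0 (A x) -> ev0 (A (c *: x)).
Proof.
move=> hx.
apply: (@ev0_le _ _ (fun n => C1 * absK c * A x n + (C2 * absK c + C3) / n%:R) 0%N).
  move=> n _; rewrite /A scalerMnr.
  idtac.
  case: hl => _ _ _ /(_ c (x *+ n) 0) [_]; rewrite scaler0 => h.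
  rewrite mulrA -mulrDl; apply: ler_wpM2r; first by rewrite invr_ge0.
  lra.
apply: ev0_add; last exact: ev0_inv.
apply: ev0_scale => //; exact: A_ge0.
Qed.

End Main.

Theorem proposition5 (R : realType) (k : scalar_kind) (E : lmodType (scal R k))
    (d : E -> E -> R) (C0 C1 C2 C3 : R) :
  metric_vector_space d ->
  translation_invariant d C0 ->
  lipschitz_multiplicative d C1 C2 C3 ->
  is_subspace (E0 d) /\ d_closed d (E0 d).
Proof.
move=> hm ht hl.
have E0ev := E0_ev0 hm ht.
have evE0 := ev0_E0 hm.
split; first split.
- apply: evE0 => u _ e e0; exists 0%N => n _.
  by rewrite /A scaler0 mul0rn d_xx // mul0r ltW.
- move=> a x y hx hy; apply: evE0 => u hu.
  rewrite scalerDr scalerA.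
  apply: (@ev0_le _ _ (fun n => A d (u * a *: x) n + A d (u *: y) n + C0 / n%:R) 0%N).
    by move=> n _; apply: A_add.
  apply: ev0_add; last exact: ev0_inv.
  apply: ev0_add; last exact: E0ev _ _ hy hu.
  apply: (A_scale hm hl).
  by have := E0ev _ _ hx (absK1 R k); rewrite scale1r.
- move=> x hx; apply: evE0 => u hu e e0.
  have e4 : 0 < e / 4 by rewrite divr_gt0.
  have [N0 HN0] := ev0_inv (1 + 2 * C0) _ e4.
  pose m := N0.+1.
  have hm0 : (0 < m)%N by [].
  have hmb := HN0 m (leqnSn _).
  case: (hm) => _ [_ /(_ (u *+ m) x 1 ltr01) [del del0 Hc]].
  have [y hy hxy] := hx del del0.
  have h1 : d ((u *+ m) *: x) ((u *+ m) *: y) < 1.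
    by apply: Hc => //; rewrite subrr absK0.
  pose v := u *: x - u *: y.
  have h2 : d (v *+ m) 0 + C0 <= 1 + 2 * C0.
    rewrite /v mulrnBl !scalerMnl -(subrr ((u *+ m) *: y)).
    have := ht ((u *+ m) *: x) ((u *+ m) *: y) (- ((u *+ m) *: y)); lra.
  pose b n := d (v *+ n) 0 + C0.
  have hC0 := C0_ge0 hm ht.
  have hb0 : forall n, 0 <= b n by move=> n; rewrite /b addr_ge0 ?d_ge0.
  have hbs : forall n m, b (n + m) <= b n + b m.
    by move=> n m'; rewrite /b mulrnDr; have := @d_add _ _ _ _ _ hm ht (v *+ n) (v *+ m'); lra.
  have [N1 HN1] := fek_bound hb0 hbs m hm0 _ e4.
  have [N2 HN2] := E0ev _ _ hy hu _ e4.
  have [N3 HN3] := ev0_inv C0 _ e4.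
  exists (maxn N1 (maxn N2 N3)) => n; rewrite !geq_max => /and3P[n1 n2 n3].
  have ex : u *: x = u *: y + v by rewrite /v addrC subrK.
  rewrite ex. apply: le_trans. apply: (A_add hm ht).
  have hA1 := HN2 n n2.
  have hA3 := HN3 n n3.
  have hb := HN1 n n1.
  have hbn : b n / n%:R = A d v n + C0 / n%:R by rewrite /b /A mulrDl.
  have hbm : b m / m%:R <= (1 + 2 * C0) / m%:R.
    by apply: ler_wpM2r => //; rewrite invr_ge0.
  have hc : 0 <= C0 / n%:R by rewrite divr_ge0.
  lra.
Qed.
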